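(* Assume only upper-bound group constraints (with $\mathcal S\ne\emptyset$) and let $F$ be a maxmin-fair distribution over $\mathcal S$ for satisfaction $A=V$. Then for every probability distribution $D$ over $\mathcal S$, $$\max_{u\in\mathcal U}F[u]-\min_{v\in\mathcal U}F[v]\ \le\ \max_{u\in\mathcal U}D[u]-\min_{v\in\mathcal U}D[v].$$
   Context: Ranking setting: $\mathcal U=\{u_1,\dots,u_n\}$ finite set of individuals partitioned into groups $C_1,\dots,C_t$; $R:\mathcal U\to\mathbb R$ relevance with distinct values; rankings are bijections $r:\mathcal U\to[n]$. Only upper bounds: $\mathcal S=\{r:\ |\{u\in C_k: r(u)\le i\}|\le u_i^k\ \forall i\in[n],k\in[t]\}$ for given integers $u_i^k$. Value function $V(r,u)=f(r(u))-g(u)$ with $f:[n]\to\mathbb R$ non-increasing and $g:\mathcal U\to\mathbb R$ satisfying $R(u)\ge R(v)\Rightarrow g(u)\ge g(v)$. For a distribution $D$ over $\mathcal S$, $D[u]=\mathbb E_{r\sim D}[V(r,u)]$. $F$ is maxmin-fair if for every distribution $D$ over $\mathcal S$ and every $u$: $D[u]>F[u]$ implies there is $v$ with $D[v]<F[v]\le F[u]$. *)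

(* Defs.v *)
From mathcomp Require Import all_boot all_order all_algebra.
From mathcomp Require Export reals.
Set Implicit Arguments. Unset Strict Implicit. Unset Printing Implicit Defensive.
Import Order.TTheory GRing.Theory Num.Theory.
Local Open Scope ring_scope.

(* Individuals: a finite type U with n := #|U| elements.
   A ranking is a bijection U -> [n]; we represent it by an injective
   finite function r : U -> 'I_#|U|, the rank of u being (r u).+1 in [n]. *)
Definition ranking (U : finType) := {ffun U -> 'I_#|U|}.

Definition is_ranking (U : finType) (r : ranking U) : bool := injectiveb r.

Definition rank (U : finType) (r : ranking U) (u : U) : nat := (nat_of_ord (r u)).+1.

(* Upper-bound group constraints: grp : U -> K assigns each individual its
   group C_k; ub i k is the upper bound u_i^k. *)
Definition in_S (U K : finType) (grp : U -> K) (ub : nat -> K -> nat)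
  (r : ranking U) : bool :=
  is_ranking r &&
  [forall k : K, [forall i : 'I_#|U|,
     (#|[set u | (grp u == k) && (rank r u <= i.+1)%N]| <= ub i.+1 k)%N]].

Definition V (R : realType) (U : finType) (f : nat -> R) (g : U -> R)
  (r : ranking U) (u : U) : R := f (rank r u) - g u.

Definition distr_on_S (R : realType) (U K : finType) (grp : U -> K)
  (ub : nat -> K -> nat) (D : {ffun ranking U -> R}) : Prop :=
  (forall r, 0 <= D r) /\ (\sum_r D r = 1) /\
  (forall r, D r != 0 -> in_S grp ub r).

Definition expV (R : realType) (U : finType) (f : nat -> R) (g : U -> R)
  (D : {ffun ranking U -> R}) (u : U) : R :=
  \sum_r D r * V f g r u.

Definition maxmin_fair (R : realType) (U K : finType) (grp : U -> K)
  (ub : nat -> K -> nat) (f : nat -> R) (g : U -> R)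
  (F : {ffun ranking U -> R}) : Prop :=
  distr_on_S grp ub F /\
  forall D, distr_on_S grp ub D ->
    forall u, expV f g D u > expV f g F u ->
      exists v, expV f g D v < expV f g F v /\ expV f g F v <= expV f g F u.

(* max and min over the nonempty finite type U (u0 witnesses nonemptiness;
   the value does not depend on u0). *)
Definition maxU (R : realType) (U : finType) (u0 : U) (x : U -> R) : R :=
  \big[Num.max/x u0]_(u : U) x u.
Definition minU (R : realType) (U : finType) (u0 : U) (x : U -> R) : R :=
  \big[Num.min/x u0]_(u : U) x u.

(* Main.v *)
Require Import Defs.
From mathcomp Require Import all_boot all_order all_algebra.
From mathcomp Require Import ring lra.
Import Order.TTheory GRing.Theory Num.Theory.
Local Open Scope ring_scope.
Set Implicit Arguments. Unset Strict Implicit. Unset Printing Implicit Defensive.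

Definition sw (U : eqType) (a b w : U) : U :=
  if w == a then b else if w == b then a else w.

Lemma swK (U : eqType) (a b : U) : involutive (sw a b).
Proof.
move=> w; rewrite /sw.
case: (eqVneq w a) => [->|nwa]; first by rewrite eqxx; case: (eqVneq b a) => [->|]; rewrite ?eqxx.
case: (eqVneq w b) => [->|nwb]; first by rewrite eqxx.
by rewrite (negPf nwa) (negPf nwb).
Qed.

Lemma sw_inj (U : eqType) (a b : U) : injective (sw a b).
Proof. exact: inv_inj (swK a b). Qed.

Lemma swL (U : eqType) (a b : U) : sw a b a = b.
Proof. by rewrite /sw eqxx. Qed.
Lemma swR (U : eqType) (a b : U) : sw a b b = a.
Proof. by rewrite /sw eqxx; case: eqP. Qed.
Lemma swD (U : eqType) (a b w : U) : w != a -> w != b -> sw a b w = w.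
Proof. by rewrite /sw => /negPf -> /negPf ->. Qed.
Lemma sw_id (U : eqType) (a w : U) : sw a a w = w.
Proof. by rewrite /sw; case: eqP => // ->. Qed.

Definition swapr (U : finType) (r : ranking U) (a b : U) : ranking U :=
  [ffun w => r (sw a b w)].

Lemma swaprE (U : finType) (r : ranking U) a b w : swapr r a b w = r (sw a b w).
Proof. by rewrite ffunE. Qed.

Lemma swapr_id (U : finType) (r : ranking U) a : swapr r a a = r.
Proof. by apply/ffunP => w; rewrite swaprE sw_id. Qed.

Lemma swapr_inj (U : finType) (r : ranking U) a b :
  injective r -> injective (swapr r a b).
Proof. by move=> ir x y; rewrite !swaprE => /ir /sw_inj. Qed.

Lemma in_SP (U K : finType) (grp : U -> K) (ub : nat -> K -> nat) (r : ranking U) :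
  in_S grp ub r <-> injective r /\
    forall k (i : 'I_#|U|), (#|[set w | (grp w == k) && (r w <= i)%N]| <= ub i.+1 k)%N.
Proof.
rewrite /in_S /is_ranking; split.
  case/andP => /injectiveP ir /forallP H; split => // k i.
  move/forallP: (H k) => /(_ i).
  by congr (_ <= _)%N; apply: eq_card => w; rewrite !inE /rank ltnS.
case=> ir H; apply/andP; split; first exact/injectiveP.
apply/forallP => k; apply/forallP => i; move: (H k i).
by congr (_ <= _)%N; apply: eq_card => w; rewrite !inE /rank ltnS.
Qed.

Lemma sum_diff2 (R : comNzRingType) (U : finType) (u v : U) (F G : U -> R) :
  u != v -> (forall w, w != u -> w != v -> F w = G w) ->
  \sum_w F w = \sum_w G w + (F u - G u) + (F v - G v).
Proof.
move=> nuv H.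
rewrite (bigD1 u) //= (bigD1 v) /=; last by rewrite eq_sym.
rewrite [in RHS](bigD1 u) //= [in RHS](bigD1 v) /=; last by rewrite eq_sym.
rewrite (eq_bigr (fun w => G w)); last by move=> w /andP [] ? ?; apply: H.
set s := \sum_(i | _) G i.
ring.
Qed.

Definition fr (R : realType) (U : finType) (f : nat -> R) (r : ranking U) (u : U) : R :=
  f (rank r u).
Definition sumP (R : realType) (U : finType) (f : nat -> R) (P : pred U) (r : ranking U) : R :=
  \sum_w (if P w then fr f r w else 0).

Lemma fr_swap (R : realType) (U : finType) (f : nat -> R) (r : ranking U) a b w :
  fr f (swapr r a b) w = fr f r (sw a b w).
Proof. by rewrite /fr /rank swaprE. Qed.

Lemma sumP_swap (R : realType) (U : finType) (f : nat -> R) (P : pred U) (r : ranking U) u v :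
  sumP f P (swapr r u v) = sumP f P r + ((P v)%:R - (P u)%:R) * (fr f r u - fr f r v).
Proof.
case: (eqVneq u v) => [->|nuv]; first by rewrite swapr_id subrr mul0r addr0.
rewrite /sumP (sum_diff2 (G := fun w => if P w then fr f r w else 0) nuv); last first.
  by move=> w wu wv; rewrite fr_swap swD.
rewrite !fr_swap swL swR.
by case: (P u); case: (P v) => /=; ring.
Qed.

Lemma grp_sw (U K : finType) (grp : U -> K) a b w : grp a = grp b -> grp (sw a b w) = grp w.
Proof.
move=> e; rewrite /sw; case: (eqVneq w a) => [->|_] //.
by case: (eqVneq w b) => [->|_].
Qed.

Lemma swap_same (U K : finType) (grp : U -> K) (ub : nat -> K -> nat) (r : ranking U) a b :
  grp a = grp b -> in_S grp ub r -> in_S grp ub (swapr r a b).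
Proof.
move=> e /in_SP [ir H]; apply/in_SP; split; first exact: swapr_inj.
move=> k i; apply: leq_trans _ (H k i).
rewrite -(card_preimset _ (@sw_inj _ a b)) leq_eqVlt; apply/orP; left; apply/eqP.
apply: eq_card => w; rewrite !inE swaprE.
by rewrite (grp_sw _ e) swK.
Qed.

Definition agree (U : finType) (p : nat) (r r' : ranking U) :=
  forall w, ((r w < p)%N || (r' w < p)%N) -> r w = r' w.

Lemma agree_sym (U : finType) p (r r' : ranking U) : agree p r r' -> agree p r' r.
Proof. by move=> H w hw; rewrite H // orbC. Qed.

Lemma agree_ge (U : finType) p (r r' : ranking U) w :
  agree p r r' -> (p <= r w)%N -> (p <= r' w)%N.
Proof.
move=> H hw; rewrite leqNgt; apply/negP => hlt.
by move: hw; rewrite H ?hlt ?orbT // leqNgt hlt.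
Qed.

Lemma agree_swap (U : finType) p (r r' : ranking U) u v :
  agree p r r' -> (p <= r u)%N -> (p <= r v)%N -> agree p (swapr r u v) r'.
Proof.
move=> H hu hv w; rewrite swaprE.
case: (eqVneq w u) => [->|wu]; first by rewrite swL ltnNge hv /= ltnNge (agree_ge H hu).
case: (eqVneq w v) => [->|wv]; first by rewrite swR ltnNge hu /= ltnNge (agree_ge H hv).
rewrite swD //; exact: H.
Qed.

Lemma swap_first (U K : finType) (grp : U -> K) (ub : nat -> K -> nat) (r r' : ranking U)
   (p : nat) a b y :
  in_S grp ub r -> in_S grp ub r' -> agree p r r' -> (r' b = p :> nat) -> (r a = p :> nat) ->
  grp y = grp b -> (p <= r y)%N ->
  (forall w, grp w = grp b -> (p <= r w)%N -> (r y <= r w)%N) ->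
  in_S grp ub (swapr r a y).
Proof.
move=> hS hS' ag rb ra gy py ymin.
case: (eqVneq a y) => [<-|nay]; first by rewrite swapr_id.
move/in_SP: hS => [ir H]; move/in_SP: hS' => [ir' H'].
apply/in_SP; split; first exact: swapr_inj.
move=> k i.
case: (boolP [&& grp y == k, (p <= i)%N & (i < r y)%N]) => [/and3P[/eqP gk pi iq] | hc].
  set A := [set w | (grp w == k) && (r w < p)%N].
  have sub1 : [set w | (grp w == k) && (swapr r a y w <= i)%N] \subset y |: A.
    apply/subsetP => w; rewrite !inE swaprE => /andP [/eqP gw hw].
    case: (eqVneq w y) => [//|wy] /=.
    case: (eqVneq w a) => [wa|wa].
      by move: hw; rewrite wa swL leqNgt iq.
    move: hw; rewrite swD // => hw; rewrite gw eqxx /=.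
    rewrite ltnNge; apply/negP => pw.
    have := ymin w; rewrite gw -gk gy => /(_ erefl pw).
    by rewrite leqNgt (leq_ltn_trans hw iq).
  have sub2 : b |: A \subset [set w | (grp w == k) && (r' w <= i)%N].
    apply/subsetP => w; rewrite !inE => /orP [/eqP ->|/andP [gw hw]].
      by rewrite -gy gk eqxx rb pi.
    by rewrite gw /= -(ag w) ?hw // (leq_trans (ltnW hw) pi).
  have bA : b \notin A.
    rewrite inE; apply/negP => /andP [_ hb].
    have e := ag b; rewrite hb /= in e.
    by move: hb; rewrite e // rb ltnn.
  apply: leq_trans (subset_leq_card sub1) _.
  apply: leq_trans _ (H' k i).
  apply: leq_trans _ (subset_leq_card sub2).
  by rewrite !cardsU1 bA leq_add2r leq_b1.
apply: leq_trans _ (H k i); apply: subset_leq_card.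
apply/subsetP => w; rewrite !inE swaprE => /andP [/eqP gw hw].
rewrite gw eqxx /=.
case: (eqVneq w a) => [wa|wa].
  by move: hw; rewrite wa swL ra => hw; apply: leq_trans py hw.
case: (eqVneq w y) => [wy|wy].
  move: hw hc; rewrite -wy swR ra gw eqxx /= => pi.
  by rewrite pi /= -leqNgt.
by move: hw; rewrite swD.
Qed.

Definition domr (R : realType) (U : finType) (f : nat -> R) (W : pred U) (r1 r : ranking U) :=
  forall u, ~~ W u -> fr f r u <= fr f r1 u.
Definition sdomr (R : realType) (U : finType) (f : nat -> R) (W : pred U) (r1 r : ranking U) :=
  domr f W r1 r /\ exists u, ~~ W u /\ fr f r u < fr f r1 u.

Lemma sdom_trans (R : realType) (U : finType) (f : nat -> R) (W : pred U) (r r1 r2 : ranking U) :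
  domr f W r1 r -> sdomr f W r2 r1 -> sdomr f W r2 r.
Proof.
move=> d1 [d2 [u [Wu lt]]]; split.
  by move=> w Ww; apply: le_trans (d1 w Ww) (d2 w Ww).
by exists u; split => //; apply: le_lt_trans (d1 u Wu) lt.
Qed.

Lemma fr_mono (R : realType) (U : finType) (f : nat -> R)
  (hf : forall i j : nat, (1 <= i)%N -> (i <= j)%N -> (j <= #|U|)%N -> f j <= f i)
  (r : ranking U) u v : (r u <= r v)%N -> fr f r v <= fr f r u.
Proof. by move=> h; rewrite /fr /rank; apply: hf => //; rewrite ltnS ?ltn_ord. Qed.

Lemma pos_exists (U : finType) (r : ranking U) (i : 'I_#|U|) :
  injective r -> exists u, r u = i.
Proof.
move=> ir; have := inj_card_onto ir; rewrite card_ord => /(_ (leqnn _) i).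
by case/codomP => u ->; exists u.
Qed.

Lemma ML_gen (R : realType) (U K : finType) (grp : U -> K) (ub : nat -> K -> nat)
  (f : nat -> R)
  (hf : forall i j : nat, (1 <= i)%N -> (i <= j)%N -> (j <= #|U|)%N -> f j <= f i)
  (W : pred U) :
  forall k p, (p + k)%N = #|U| -> forall r r' : ranking U,
    in_S grp ub r -> in_S grp ub r' -> agree p r r' -> sumP f W r' < sumP f W r ->
    exists r'', in_S grp ub r'' /\ sdomr f W r'' r.
Proof.
elim=> [|k IH] p hp r r' hS hS' ag hlt.
  have e : r = r'.
    apply/ffunP => w; apply: ag; apply/orP; left; apply: (leq_trans (ltn_ord (r w))); rewrite -hp addn0 //.
  by rewrite e ltxx in hlt.
have pn : (p < #|U|)%N by rewrite -hp -addSnnS leq_addr.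
set pp := Ordinal pn.
have injS : forall s, in_S grp ub s -> injective s by move=> s /in_SP [].
have [a ra] := pos_exists pp (injS _ hS).
have [b rb] := pos_exists pp (injS _ hS').
have close : forall r1 r1' c, in_S grp ub r1 -> in_S grp ub r1' -> agree p r1 r1' ->
    r1 c = pp -> r1' c = pp -> sumP f W r1' < sumP f W r1 ->
    exists r'', in_S grp ub r'' /\ sdomr f W r'' r1.
  move=> r1 r1' c h1 h1' ag1 e1 e1' lt1.
  apply: (IH p.+1 _ r1 r1' h1 h1' _ lt1); first by rewrite -hp addSnnS.
  move=> w hw.
  case: (boolP ((r1 w < p)%N || (r1' w < p)%N)) => [h|h]; first exact: ag1.
  move: hw h; rewrite negb_or -!leqNgt !ltnS => /orP [] h1w /andP [h2 h3].
  - have -> : w = c.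
      by apply: (injS _ h1); apply: val_inj; rewrite e1 /=; apply/eqP; rewrite eqn_leq h1w h2.
    by rewrite e1 e1'.
  - have -> : w = c.
      by apply: (injS _ h1'); apply: val_inj; rewrite e1' /=; apply/eqP; rewrite eqn_leq h1w h3.
    by rewrite e1 e1'.
have ra' : r a = p :> nat by rewrite ra.
have rb' : r' b = p :> nat by rewrite rb.
have mono := fr_mono hf.
case: (boolP (W a)) => Wa.
  have Pb : (grp b == grp b) && (p <= r b)%N.
    by rewrite eqxx /= (agree_ge (agree_sym ag)) ?rb'.
  case: (@arg_minnP _ b (fun w => (grp w == grp b) && (p <= r w)%N) (fun w => nat_of_ord (r w)) Pb) => y /andP [/eqP gy py] ymin.
  set r1 := swapr r a y.
  have hS1 : in_S grp ub r1.
    apply: (swap_first hS hS' ag rb' ra' gy py) => w gw pw.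
    by apply: ymin; rewrite gw eqxx pw.
  have r1y : r1 y = pp by rewrite /r1 swaprE swR.
  have fr1 : forall u, fr f r1 u = fr f r (sw a y u) by move=> u; rewrite fr_swap.
  have dom1 : domr f W r1 r.
    move=> u Wu; rewrite fr1.
    case: (eqVneq u a) => [ua|ua]; first by rewrite ua Wa in Wu.
    case: (eqVneq u y) => [->|uy]; last by rewrite swD.
    by rewrite swR; apply: mono; rewrite ra'.
  case: (boolP (~~ W y && (fr f r y < fr f r a))) => [/andP [Wy lty]|hns].
    exists r1; split => //; split => //; exists y; split => //.
    by rewrite fr1 swR.
  have sum1 : sumP f W r1 = sumP f W r.
    rewrite /r1 sumP_swap Wa.
    case: (boolP (W y)) => Wy; first by rewrite subrr mul0r addr0.
    rewrite Wy /= in hns.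
    have : fr f r y <= fr f r a by apply: mono; rewrite ra'.
    rewrite le_eqVlt (negPf hns) orbF => /eqP ->.
    by rewrite subrr mulr0 addr0.
  have ag1 : agree p r1 r' by apply: agree_swap; rewrite ?ra'.
  have p1b : (p <= r1 b)%N by rewrite (agree_ge (agree_sym ag1)) ?rb'.
  have p'y : (p <= r' y)%N by apply: (agree_ge ag1); rewrite r1y.
  case: (boolP (~~ W y || W b)) => hyb.
    set r1' := swapr r' b y.
    have hS1' : in_S grp ub r1' by apply: swap_same.
    have r1'y : r1' y = pp by rewrite /r1' swaprE swR.
    have ag2 : agree p r1 r1'.
      by apply/agree_sym/agree_swap; rewrite ?rb' //; apply: agree_sym.
    have lt2 : sumP f W r1' < sumP f W r1.
      rewrite sum1 /r1' sumP_swap; apply: le_lt_trans hlt.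
      rewrite gerDl; have : fr f r' y <= fr f r' b by apply: mono; rewrite rb'.
      by move: hyb; case: (W y); case: (W b) => //= _; lra.
    have [r'' [h'' sd]] := close r1 r1' y hS1 hS1' ag2 r1y r1'y lt2.
    by exists r''; split => //; apply: sdom_trans dom1 sd.
  move: hyb; rewrite negb_or negbK => /andP [Wy Wb].
  set r2 := swapr r1 y b.
  have hS2 : in_S grp ub r2 by apply: swap_same.
  have r2b : r2 b = pp by rewrite /r2 swaprE swR.
  have fr2 : forall u, fr f r2 u = fr f r1 (sw y b u) by move=> u; rewrite fr_swap.
  have dom2 : domr f W r2 r1.
    move=> u Wu; rewrite fr2.
    case: (eqVneq u y) => [uy|uy]; first by rewrite uy Wy in Wu.
    case: (eqVneq u b) => [->|ub']; last by rewrite swD.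
    by rewrite swR; apply: mono; rewrite r1y.
  have le2 : fr f r1 b <= fr f r1 y by apply: mono; rewrite r1y.
  case: (boolP (fr f r1 b < fr f r1 y)) => hlt2.
    exists r2; split => //; apply: sdom_trans dom1 _; split => //.
    by exists b; split => //; rewrite fr2 swR.
  have sum2 : sumP f W r2 = sumP f W r1.
    rewrite /r2 sumP_swap.
    move: le2; rewrite le_eqVlt (negPf hlt2) orbF => /eqP ->.
    by rewrite subrr mulr0 addr0.
  have ag3 : agree p r2 r' by apply: agree_swap; rewrite ?r1y.
  have lt3 : sumP f W r' < sumP f W r2 by rewrite sum2 sum1.
  have [r'' [h'' sd]] := close r2 r' b hS2 hS' ag3 r2b rb lt3.
  exists r''; split => //; apply: sdom_trans dom1 _; apply: sdom_trans dom2 sd.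
have Pa : (grp a == grp a) && (p <= r' a)%N.
  by rewrite eqxx /= (agree_ge ag) ?ra'.
case: (@arg_minnP _ a (fun w => (grp w == grp a) && (p <= r' w)%N) (fun w => nat_of_ord (r' w)) Pa) => x /andP [/eqP gx px] xmin.
set r1' := swapr r' b x.
have hS1' : in_S grp ub r1'.
  apply: (swap_first hS' hS (agree_sym ag) ra' rb' gx px) => w gw pw.
  by apply: xmin; rewrite gw eqxx pw.
have r1'x : r1' x = pp by rewrite /r1' swaprE swR.
have ag1 : agree p r1' r by apply: agree_swap; rewrite ?rb' //; apply: agree_sym.
set r2' := swapr r1' x a.
have hS2' : in_S grp ub r2' by apply: swap_same.
have r2'a : r2' a = pp by rewrite /r2' swaprE swR.
have ag2 : agree p r r2'.
  apply/agree_sym/agree_swap; rewrite ?r1'x //.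
  by rewrite (agree_ge (agree_sym ag1)) ?ra'.
have xa : (r' x <= r' a)%N by apply: xmin; rewrite eqxx /= (agree_ge ag) ?ra'.
have lt2 : sumP f W r2' < sumP f W r.
  apply: le_lt_trans hlt.
  rewrite /r2' sumP_swap /r1' sumP_swap !fr_swap swR !(negPf Wa).
  have Fbx : fr f r' x <= fr f r' b by apply: mono; rewrite rb'.
  case: (eqVneq a x) Fbx => [<-|nax] Fbx.
    rewrite !(negPf Wa) /= subrr mul0r addr0.
    by case: (W b) => /=; lra.
  have nab : a != b.
    apply/negP => /eqP eab; move: nax; rewrite eab.
    have : r' x = r' b :> nat.
      by apply/eqP; rewrite eqn_leq rb' px andbT; move: xa; rewrite eab rb'.
    by move/val_inj/(injS _ hS') => ->; rewrite eqxx.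
  rewrite swD // ?(eq_sym a) //.
  have Fxa : fr f r' a <= fr f r' x by apply: mono.
  rewrite -addrA gerDl.
  by case: (W x); case: (W b) => /=; lra.
have [r'' [h'' sd]] := close r r2' a hS hS2' ag2 ra r2'a lt2.
by exists r''.
Qed.
Lemma maxU_ge (R : realType) (U : finType) (u0 : U) (x : U -> R) u : x u <= maxU u0 x.
Proof. exact: le_bigmax. Qed.
Lemma minU_le (R : realType) (U : finType) (u0 : U) (x : U -> R) u : minU u0 x <= x u.
Proof. exact: bigmin_le. Qed.
Lemma maxU_att (R : realType) (U : finType) (u0 : U) (x : U -> R) : exists u, maxU u0 x = x u.
Proof.
rewrite /maxU; apply: (big_ind (fun z => exists u, z = x u)); first by exists u0.
  move=> _ _ [a ->] [b ->]; case: (leP (x a) (x b)) => _; [by exists b | by exists a].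
by move=> u _; exists u.
Qed.
Lemma minU_att (R : realType) (U : finType) (u0 : U) (x : U -> R) : exists u, minU u0 x = x u.
Proof.
rewrite /minU; apply: (big_ind (fun z => exists u, z = x u)); first by exists u0.
  move=> _ _ [a ->] [b ->]; case: (leP (x a) (x b)) => _; [by exists a | by exists b].
by move=> u _; exists u.
Qed.

Lemma expV_mix (R : realType) (U : finType) (f : nat -> R) (g : U -> R)
  (F : {ffun ranking U -> R}) (r r'' : ranking U) u :
  r'' != r ->
  expV f g [ffun s => F s + (if s == r'' then F r else 0) - (if s == r then F r else 0)] u
  = expV f g F u + F r * V f g r'' u - F r * V f g r u.
Proof.
move=> nr; rewrite /expV.
rewrite (eq_bigr (fun s => F s * V f g s u + (if s == r'' then F r * V f g r'' u else 0)
   - (if s == r then F r * V f g r u else 0))); last first.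
  move=> s _; rewrite ffunE.
  case: (eqVneq s r'') => [->|_]; first by rewrite (negPf nr); ring.
  by case: (eqVneq s r) => [->|_]; ring.
rewrite sumrB big_split /= -!big_mkcond /= !big_pred1_eq.
by [].
Qed.

Lemma sumW_exp (R : realType) (U : finType) (f : nat -> R) (g : U -> R) (W : pred U)
  (D : {ffun ranking U -> R}) :
  \sum_r D r = 1 ->
  \sum_(u | W u) expV f g D u = \sum_r D r * sumP f W r - \sum_(u | W u) g u.
Proof.
move=> hD; rewrite /expV exchange_big /=.
rewrite (eq_bigr (fun r => D r * sumP f W r - D r * \sum_(u | W u) g u)); last first.
  move=> r _; rewrite -mulrBr -mulr_sumr; congr (_ * _).
  rewrite /sumP -big_mkcond /= -sumrB.
  by apply: eq_bigr.
by rewrite sumrB -mulr_suml hD mul1r.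
Qed.

Unset Implicit Arguments.
Set Strict Implicit.

Theorem mainTheorem3 (R : realType) (U K : finType) (u0 : U)
  (grp : U -> K) (ub : nat -> K -> nat)
  (Rel : U -> R) (f : nat -> R) (g : U -> R)
  (Rel_inj : injective Rel)
  (f_noninc : forall i j : nat, (1 <= i)%N -> (i <= j)%N -> (j <= #|U|)%N -> f j <= f i)
  (g_mono : forall u v : U, Rel v <= Rel u -> g v <= g u)
  (S_nonempty : exists r : ranking U, in_S grp ub r)
  (F : {ffun ranking U -> R})
  (F_fair : maxmin_fair grp ub f g F) :
  forall D : {ffun ranking U -> R}, distr_on_S grp ub D ->
    maxU u0 (expV f g F) - minU u0 (expV f g F)
      <= maxU u0 (expV f g D) - minU u0 (expV f g D).
Proof.
move=> D hD.
case: F_fair => hF fair.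
have [Fge [Fsum FS]] := hF.
have [Dge [Dsum DS]] := hD.
set EF := expV f g F.
set M := maxU u0 EF.
set m := minU u0 EF.
have stepA : minU u0 (expV f g D) <= m.
  have [us hus] := minU_att u0 EF.
  rewrite /m hus.
  case: (leP (expV f g D us) (EF us)) => h.
    exact: le_trans (minU_le u0 _ us) h.
  have [v [hv1 hv2]] := fair D hD us h.
  apply: le_trans (minU_le u0 _ v) _.
  exact: ltW (lt_le_trans hv1 hv2).
pose W := fun u => EF u == M.
have claim3 : forall r r', F r != 0 -> in_S grp ub r' -> sumP f W r <= sumP f W r'.
  move=> r r' Fr hr'; rewrite leNgt; apply/negP => hlt.
  have hr := FS r Fr.
  have [r'' [hr'' [dom [x [Wx ltx]]]]] :=
    ML_gen f_noninc (k := #|U|) (p := 0) erefl hr hr' (fun w => ltac:(by [])) hlt.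
  have nr : r'' != r by apply/eqP => e; rewrite e ltxx in ltx.
  set G := [ffun s => F s + (if s == r'' then F r else 0) - (if s == r then F r else 0)].
  have Frpos : 0 < F r by rewrite lt_def Fr Fge.
  have hG : distr_on_S grp ub G.
    split; [|split].
    - move=> s; rewrite /G ffunE.
      case: (eqVneq s r) => [->|nsr]; first by rewrite eq_sym (negPf nr) addr0 subrr.
      rewrite subr0; case: (s == r''); last by rewrite addr0.
      by rewrite addr_ge0 // ltW.
    - rewrite /G.
      rewrite (eq_bigr (fun s => F s + (if s == r'' then F r else 0) - (if s == r then F r else 0)));
        last by move=> s _; rewrite ffunE.
      rewrite sumrB big_split /= -!big_mkcond /= !big_pred1_eq Fsum.
      by rewrite addrK.
    - move=> s; rewrite /G ffunE.
      case: (eqVneq s r) => [->|nsr]; first by move=> _; exact: hr.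
      rewrite subr0; case: (eqVneq s r'') => [->|_] // .
      by rewrite addr0; apply: FS.
  have EG : forall u, expV f g G u = EF u + F r * (fr f r'' u - fr f r u).
    move=> u; rewrite /G expV_mix // /EF /V /fr; ring.
  have gx : expV f g G x > EF x.
    by rewrite EG ltrDl mulr_gt0 // subr_gt0.
  have [v [hv1 hv2]] := fair G hG x gx.
  have Wv : W v.
    apply/negPn/negP => Wv.
    move: hv1; rewrite EG gtrDl pmulr_rlt0 // subr_lt0 => hlt2.
    by have := dom v Wv; rewrite leNgt hlt2.
  have : EF x < M.
    rewrite lt_neqAle Wx; exact: maxU_ge.
  by rewrite -(eqP Wv) ltNge hv2.
have [r0 Fr0] : exists r0, F r0 != 0.
  apply/existsP; rewrite -negb_forall; apply/negP => /forallP H.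
  move: Fsum; rewrite big1 => [|r _]; last exact/eqP.
  by move/eqP; rewrite eq_sym oner_eq0.
set mu := sumP f W r0.
have suppF : forall r, F r != 0 -> sumP f W r = mu.
  move=> r Fr; apply/eqP; rewrite eq_le claim3 ?FS // claim3 ?FS //.
have sumF : \sum_r F r * sumP f W r = mu.
  rewrite -[RHS]mul1r -Fsum mulr_suml; apply: eq_bigr => r _.
  case: (eqVneq (F r) 0) => [->|Fr]; first by rewrite !mul0r.
  by rewrite suppF.
have sumD : mu <= \sum_r D r * sumP f W r.
  rewrite -[leLHS]mul1r -Dsum mulr_suml; apply: ler_sum => r _.
  case: (eqVneq (D r) 0) => [->|Dr]; first by rewrite !mul0r.
  by apply: ler_wpM2l => //; apply: claim3 => //; apply: DS.
have [uM huM] := maxU_att u0 EF.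
have WuM : W uM by rewrite /W -huM.
have cardW : (0 < #|[pred u | W u]|)%N by apply/card_gt0P; exists uM.
have stepB : M <= maxU u0 (expV f g D).
  rewrite -(ler_pMn2r cardW) -!sumr_const.
  apply: le_trans (_ : \sum_(u | W u) expV f g D u <= _); last first.
    by apply: ler_sum => u _; apply: maxU_ge.
  rewrite (eq_bigr (fun u => EF u)); last by move=> u /eqP.
  rewrite /EF !sumW_exp // sumF.
  by rewrite lerD2r.
by apply: lerB.
Qed.
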